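(* Let $P$ be a well-ordered phaser and suppose $P\to Q$. Then $P\mathbin{||}Q$, i.e. both $P\unrhd Q$ and $Q\unrhd P$.
   Context: A view is a record $v=(\mathrm{sp}(v),\mathrm{wp}(v),\mathrm{mode}(v))$ with $\mathrm{sp}(v),\mathrm{wp}(v)\in\mathbb{N}$ and $\mathrm{mode}(v)\in\{\mathtt{SW},\mathtt{SO},\mathtt{WO}\}$. For a view or mode, $\mathrm{CanSignal}$ means the mode is $\mathtt{SW}$ or $\mathtt{SO}$, and $\mathrm{CanWait}$ means the mode is $\mathtt{SW}$ or $\mathtt{WO}$. A phaser $P$ is a finite partial map from task identifiers to views. For views, $v_1\unrhd v_2$ iff $\mathrm{mode}(v_1)=\mathtt{WO}$ or $\mathrm{sp}(v_1)\ge\mathrm{wp}(v_2)$ or $\mathrm{mode}(v_2)=\mathtt{SO}$. For phasers, $P\unrhd Q$ iff $P(t)\unrhd Q(t')$ for all $t\in\mathrm{dom}\,P$, $t'\in\mathrm{dom}\,Q$; $P\mathbin{||}Q$ iff $P\unrhd Q$ and $Q\unrhd P$. $P$ is well-ordered iff $P\unrhd P$. Reduction $P\to_t^{o}Q$ is defined by four rules. Signal: if $P(t)=v$, $\mathrm{CanSignal}(v)$, and ($\mathrm{mode}(v)=\mathtt{SW}\Rightarrow\mathrm{wp}(v)=\mathrm{sp}(v)$), then $Q=P[t\mapsto v']$ with $v'$ equal to $v$ except $\mathrm{sp}(v')=\mathrm{sp}(v)+1$. Wait: if $P(t)=v$, $\mathrm{CanWait}(v)$, ($\mathrm{mode}(v)=\mathtt{SW}\Rightarrow\mathrm{wp}(v)+1=\mathrm{sp}(v)$),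 and $\mathrm{Sync}(P,t)$, meaning that every $t'\in\mathrm{dom}\,P$ with $\mathrm{CanSignal}(P(t'))$ has $\mathrm{sp}(P(t'))>\mathrm{wp}(v)$, then $Q=P[t\mapsto v']$ with $v'$ equal to $v$ except $\mathrm{wp}(v')=\mathrm{wp}(v)+1$. Register$(t',r)$: if $t'\notin\mathrm{dom}\,P$, $P(t)=v$, ($\mathrm{CanWait}(r)\Rightarrow\mathrm{CanWait}(v)$) and ($\mathrm{CanSignal}(r)\Rightarrow\mathrm{CanSignal}(v)$), then $Q=P[t'\mapsto(\mathrm{sp}(v),\mathrm{wp}(v),r)]$. Drop: if $t\in\mathrm{dom}\,P$, then $Q$ is $P$ with $t$ removed. $P\to Q$ means $P\to_t^{o}Q$ for some $t,o$. *)

(* Defs.v *)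
From Stdlib Require Import Arith List.

Inductive mode : Type := SW | SO | WO.

Record view : Type := mkView { sp : nat; wp : nat; vmode : mode }.

Definition CanSignalM (m : mode) : Prop := m = SW \/ m = SO.
Definition CanWaitM (m : mode) : Prop := m = SW \/ m = WO.
Definition CanSignal (v : view) : Prop := CanSignalM (vmode v).
Definition CanWait (v : view) : Prop := CanWaitM (vmode v).

Definition tid := nat.

Definition phaser := tid -> option view.

Definition finite_phaser (P : phaser) : Prop :=
  exists l : list tid, forall t, P t <> None -> In t l.

Definition in_dom (P : phaser) (t : tid) : Prop := P t <> None.

Definition upd (P : phaser) (t : tid) (v : view) : phaser :=
  fun t' => if Nat.eqb t' t then Some v else P t'.

Definition remove (P : phaser) (t : tid) : phaser :=
  fun t' => if Nat.eqb t' t then None else P t'.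

Definition view_ge (v1 v2 : view) : Prop :=
  vmode v1 = WO \/ sp v1 >= wp v2 \/ vmode v2 = SO.

Definition phaser_ge (P Q : phaser) : Prop :=
  forall t t' v v', P t = Some v -> Q t' = Some v' -> view_ge v v'.

Definition phaser_par (P Q : phaser) : Prop := phaser_ge P Q /\ phaser_ge Q P.

Definition well_ordered (P : phaser) : Prop := phaser_ge P P.

Definition Sync (P : phaser) (t : tid) : Prop :=
  exists v, P t = Some v /\
  forall t' v', P t' = Some v' -> CanSignal v' -> sp v' > wp v.

Inductive op : Type :=
  | OSignal | OWait | ORegister (t' : tid) (r : mode) | ODrop.

Inductive reduces : phaser -> tid -> op -> phaser -> Prop :=
  | R_signal : forall P t v,
      P t = Some v -> CanSignal v ->
      (vmode v = SW -> wp v = sp v) ->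
      reduces P t OSignal (upd P t (mkView (S (sp v)) (wp v) (vmode v)))
  | R_wait : forall P t v,
      P t = Some v -> CanWait v ->
      (vmode v = SW -> wp v + 1 = sp v) ->
      Sync P t ->
      reduces P t OWait (upd P t (mkView (sp v) (S (wp v)) (vmode v)))
  | R_register : forall P t t' r v,
      P t' = None -> P t = Some v ->
      (CanWaitM r -> CanWait v) ->
      (CanSignalM r -> CanSignal v) ->
      reduces P t (ORegister t' r) (upd P t' (mkView (sp v) (wp v) r))
  | R_drop : forall P t,
      in_dom P t ->
      reduces P t ODrop (remove P t).

Definition step (P Q : phaser) : Prop := exists t o, reduces P t o Q.

(* Main.v *)
Require Import Defs.
From Stdlib Require Import Arith List Lia.

Theorem lemma3 (P Q : phaser) :
  finite_phaser P -> well_ordered P -> step P Q -> phaser_par P Q.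
Proof.
  intros _ WO [t [o R]].
  unfold well_ordered, phaser_ge in WO.
  destruct R as [P t v Pt CS Hsw | P t v Pt CW Hsw Sy | P t t' r v Pt' Pt CWr CSr | P t Hd];
    split; intros a b x y Ha Hb; unfold upd, Defs.remove in *.
  - destruct (Nat.eqb b t) eqn:E.
    + inversion Hb; subst; clear Hb. apply Nat.eqb_eq in E; subst.
      specialize (WO _ _ _ _ Ha Pt). unfold view_ge in *; simpl; tauto.
    + eauto.
  - destruct (Nat.eqb a t) eqn:E.
    + inversion Ha; subst; clear Ha. apply Nat.eqb_eq in E; subst.
      specialize (WO _ _ _ _ Pt Hb). unfold view_ge in *; simpl; destruct WO as [H|[H|H]]; [left|right;left;lia|right;right]; auto.
    + eauto.
  - destruct (Nat.eqb b t) eqn:E.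
    + inversion Hb; subst; clear Hb. apply Nat.eqb_eq in E; subst.
      destruct Sy as [v0 [Pv0 Hs]]. rewrite Pt in Pv0; inversion Pv0; subst.
      unfold view_ge; simpl.
      destruct (vmode x) eqn:Mx.
      * right; left. assert (sp x > wp v0) by (apply (Hs a); auto; unfold CanSignal, CanSignalM; auto). lia.
      * right; left. assert (sp x > wp v0) by (apply (Hs a); auto; unfold CanSignal, CanSignalM; auto). lia.
      * left; auto.
    + eauto.
  - destruct (Nat.eqb a t) eqn:E.
    + inversion Ha; subst; clear Ha. apply Nat.eqb_eq in E; subst.
      specialize (WO _ _ _ _ Pt Hb). unfold view_ge in *; simpl; tauto.
    + eauto.
  - destruct (Nat.eqb b t') eqn:E.
    + inversion Hb; subst; clear Hb.
      specialize (WO _ _ _ _ Ha Pt). unfold view_ge in *; simpl.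
      destruct WO as [H|[H|H]]; auto.
      right; right. unfold CanWait, CanWaitM, CanSignalM in *.
      destruct r; auto; exfalso; rewrite H in CWr; destruct CWr as [?|?]; auto; discriminate.
    + eauto.
  - destruct (Nat.eqb a t') eqn:E.
    + inversion Ha; subst; clear Ha.
      specialize (WO _ _ _ _ Pt Hb). unfold view_ge in *; simpl.
      destruct WO as [H|[H|H]]; auto.
      left. unfold CanSignal, CanWaitM, CanSignalM in *.
      destruct r; auto; exfalso; rewrite H in CSr; destruct CSr as [?|?]; auto; discriminate.
    + eauto.
  - destruct (Nat.eqb b t); [inversion Hb|eauto].
  - destruct (Nat.eqb a t); [inversion Ha|eauto].
Qed.
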